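(* Let $V\subset\mathbb{R}^d$ be a generic suspended antichain and let $p\in S_V$ be a characteristic point with $D_p=\{v_1,\dots,v_k\}$. For every choice of coordinates $i_1\in T_p(v_1),\dots,i_k\in T_p(v_k)$ with $p_{i_j}>0$ for all $j=1,\dots,k$, there is a maximum $M$ of $S_V$ such that $M_{i_j}=p_{i_j}$ for all $j=1,\dots,k$ (and $M\ge p$). Consequently, if moreover $p_i>0$ for all $i$, there are at least $\prod_{j=1}^k|T_p(v_j)|$ maxima of $S_V$ above $p$.
   Context: For $x,y\in\mathbb{R}^d$, $x\le y$ (dominance order) means $x_i\le y_i$ for all $i$; $y\rhd x$ means $y_i>x_i$ for all $i$; $y\rhd_i x$ means $y_i=x_i$ and $y_j>x_j$ for all $j\neq i$. $V\subset\mathbb{R}^d$ is a finite antichain in the dominance order. The orthogonal surface $S_V$ is the topological boundary of $\langle V\rangle=\{x: x\ge v\text{ for some }v\in V\}$. For $p\in S_V$, $D_p=\{v\in V:v\le p\}$ and $T_p(v)=\{i:p_i=v_i\}$. $V$ is suspended if it contains, for each $i$, a suspension vertex $M_ie_i$ (with $M_i>0$, $e_i$ the $i$-th unit vector), and every other $v\in V$ satisfies $0\le v_i<M_i$ for all $i$. A suspended $V$ is generic if whenever $v\neq w\in V$ and $v_i=w_i$ for some $i$, both $v$ and $w$ are suspension vertices. Flats: $U_i(v)=\{p\in S_V: p\rhd_i v\}$; $v\sim_i w$ iff $U_i(v)\cap U_i(w)\neq\emptyset$, with reflexive–transitive closure $\sim_i^c$; the $i$-flat of $v$ is $F_i(v)=\overline{\bigcup_{w\sim_i^c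 v}U_i(w)}$, and an $i$-flat is any set of this form. A characteristic point is a point of $S_V$ lying in some $i$-flat for every $i$. A maximum of $S_V$ is a point $M\in S_V$ such that there is no $q\in S_V$ with $q\ge M$, $q\neq M$. *)

(* Defs.v *)
From HB Require Import structures.
From mathcomp Require Import all_boot all_order all_algebra.
From mathcomp Require Import reals.
From Stdlib Require Import Relations.
Set Implicit Arguments. Unset Strict Implicit. Unset Printing Implicit Defensive.
Import Order.TTheory GRing.Theory Num.Theory.
Local Open Scope ring_scope.

Section OrthSurf.
Variables (R : realType) (d : nat).

Definition pt := {ffun 'I_d -> R}.

Definition dle (x y : pt) : Prop := forall i, x i <= y i.
Definition dtri (i : 'I_d) (y x : pt) : Prop :=
  y i = x i /\ forall j, j != i -> x j < y j.

Definition antichain (V : seq pt) : Prop :=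
  uniq V /\ forall v w, v \in V -> w \in V -> dle v w -> v = w.

Definition upset (V : seq pt) (x : pt) : Prop := exists2 v, v \in V & dle v x.

(* x within sup-distance eps of y (these balls form a base of the
   Euclidean topology of R^d) *)
Definition near_pt (eps : R) (x y : pt) : Prop := forall i, `|x i - y i| < eps.

Definition closure_pt (A : pt -> Prop) (p : pt) : Prop :=
  forall eps, 0 < eps -> exists x, A x /\ near_pt eps x p.

Definition surface (V : seq pt) (p : pt) : Prop :=
  closure_pt (upset V) p /\ closure_pt (fun x => ~ upset V x) p.

Definition Dp (V : seq pt) (p : pt) : seq pt := [seq v : pt <- V | [forall i, v i <= p i]].
Definition Tp (p v : pt) : {set 'I_d} := [set i | p i == v i].

Definition susp_vertex (M : 'I_d -> R) (i : 'I_d) : pt :=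
  [ffun j => if j == i then M i else 0].
Definition is_susp (M : 'I_d -> R) (v : pt) : Prop := exists i, v = susp_vertex M i.

Definition suspended (V : seq pt) (M : 'I_d -> R) : Prop :=
  (forall i, 0 < M i) /\ (forall i, susp_vertex M i \in V) /\
  (forall v, v \in V -> ~ is_susp M v -> forall i, 0 <= v i /\ v i < M i).

Definition generic (V : seq pt) (M : 'I_d -> R) : Prop :=
  forall v w, v \in V -> w \in V -> v != w ->
    forall i, v i = w i -> is_susp M v /\ is_susp M w.

Definition Uset (V : seq pt) (i : 'I_d) (v : pt) (p : pt) : Prop :=
  surface V p /\ dtri i p v.
Definition sim (V : seq pt) (i : 'I_d) (v w : pt) : Prop :=
  v \in V /\ w \in V /\ exists p, Uset V i v p /\ Uset V i w p.
Definition simc (V : seq pt) (i : 'I_d) : relation pt :=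
  clos_refl_trans pt (sim V i).
Definition flat (V : seq pt) (i : 'I_d) (v : pt) : pt -> Prop :=
  closure_pt (fun p => exists w, simc V i v w /\ Uset V i w p).
Definition is_flat (V : seq pt) (i : 'I_d) (F : pt -> Prop) : Prop :=
  exists2 v, v \in V & F = flat V i v.

Definition characteristic (V : seq pt) (p : pt) : Prop :=
  surface V p /\ forall i, exists F, is_flat V i F /\ F p.

Definition maximum (V : seq pt) (M : pt) : Prop :=
  surface V M /\ forall q, surface V q -> dle M q -> q = M.

End OrthSurf.

(* Main.v *)
Require Import Defs.
From HB Require Import structures.
From mathcomp Require Import all_boot all_order all_algebra.
From mathcomp Require Import reals lra.
From Stdlib Require Import Classical ClassicalEpsilon.
Import Order.TTheory GRing.Theory Num.Theory.
Local Open Scope ring_scope.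

Section Proof.
Variables (R : realType) (d : nat).
Implicit Types (V : seq (pt R d)) (p q u v w x : pt R d).

Definition sdom (w q : pt R d) : Prop := forall i, w i < q i.
Definition nodom (V : seq (pt R d)) (q : pt R d) : Prop :=
  forall w, w \in V -> ~ sdom w q.

Lemma eps_list (T : eqType) (s : seq T) (Q : T -> R -> Prop) :
  (forall t e e', Q t e -> 0 < e' -> e' <= e -> Q t e') ->
  (forall t, t \in s -> exists2 e, 0 < e & Q t e) ->
  exists2 eps, 0 < eps & forall t, t \in s -> Q t eps.
Proof.
move=> Qdown; elim: s => [|t s IH] H.
  by exists 1 => //; rewrite ltr01.
have [e1 e1p Qt] := H t (mem_head _ _).
have [e2 e2p Qs] : exists2 e, 0 < e & forall t, t \in s -> Q t e.
  by apply: IH => t' t's; apply: H; rewrite inE t's orbT.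
have m0 : 0 < Num.min e1 e2 by rewrite lt_min e1p e2p.
exists (Num.min e1 e2) => // t'; rewrite inE => /orP [/eqP -> | t's].
  by apply: (Qdown _ e1) => //; rewrite ge_min lexx.
by apply: (Qdown _ e2) => //; [apply: Qs | rewrite ge_min lexx orbT].
Qed.

Lemma argmin_list (T : eqType) (s : seq T) (f : T -> R) :
  s != [::] -> exists2 x, x \in s & forall y, y \in s -> f x <= f y.
Proof.
elim: s => [//|t s IH] _.
case: s IH => [|t' s] IH.
  by exists t; rewrite ?mem_head // => y; rewrite inE => /eqP ->.
have [x xs Hx] := IH isT.
case: (leP (f t) (f x)) => H.
- exists t; first exact: mem_head.
  move=> y; rewrite inE => /orP [/eqP -> // | ys]; exact: le_trans H (Hx _ ys).
- exists x; first by rewrite inE xs orbT.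
  move=> y; rewrite inE => /orP [/eqP -> | ys]; [exact: ltW | exact: Hx].
Qed.

Lemma surface_intro V p : (exists2 v, v \in V & dle v p) -> nodom V p ->
  surface V p.
Proof.
move=> [v vV vp] nd; split.
  move=> e e0; exists p; split; first by exists v.
  by move=> i; rewrite subrr normr0.
move=> e e0; exists [ffun i => p i - e / 2]; split.
  move=> [u uV up]; apply: (nd u uV) => i.
  have := up i; rewrite ffunE => h; lra.
move=> i; rewrite ffunE ltr_norml; apply/andP; split; lra.
Qed.

Lemma surface_elim V p : surface V p ->
  (exists2 v, v \in V & dle v p) /\ nodom V p.
Proof.
move=> [H1 H2]; split.
  apply: NNPP => Hn.
  pose Q := fun (v : pt R d) e => forall x, near_pt e x p -> ~ dle v x.
  have Qd : forall v e e', Q v e -> 0 < e' -> e' <= e -> Q v e'.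
    move=> v e e' H e'0 e'e x nx; apply: H => i.
    exact: lt_le_trans (nx i) e'e.
  have Qe : forall v, v \in V -> exists2 e, 0 < e & Q v e.
    move=> v vV.
    have [i Hi] : exists i, p i < v i.
      apply: NNPP => Hne; apply: Hn; exists v => // i.
      by rewrite leNgt; apply/negP => Hlt; apply: Hne; exists i.
    exists (v i - p i); first by rewrite subr_gt0.
    move=> x nx dx; have := nx i; have := dx i.
    rewrite ltr_norml => h1 /andP [h2 h3]; lra.
  have [e e0 He] := @eps_list _ _ _ Qd Qe.
  have [x [[u uV ux] nx]] := H1 e e0.
  exact: He u uV x nx ux.
move=> w wV dw.
pose Q := fun (i : 'I_d) e => e <= p i - w i.
have Qd : forall i e e', Q i e -> 0 < e' -> e' <= e -> Q i e'.
  by move=> i e e' h _ h'; exact: le_trans h' h.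
have Qe : forall i, i \in enum 'I_d -> exists2 e, 0 < e & Q i e.
  by move=> i _; exists (p i - w i); [rewrite subr_gt0; exact: dw | rewrite /Q lexx].
have [e e0 He] := @eps_list _ _ _ Qd Qe.
have [x [nu nx]] := H2 e e0.
apply: nu; exists w => // i.
have := He i (mem_enum _ i); have := nx i.
rewrite /Q ltr_norml => /andP [h1 h2] h3; lra.
Qed.

Lemma memDp V p v : v \in Dp V p -> v \in V /\ dle v p.
Proof.
rewrite mem_filter => /andP [/forallP H vV]; by split.
Qed.

Lemma susp_zero (Mc : 'I_d -> R) (u v : pt R d) k :
  is_susp Mc u -> is_susp Mc v -> u != v -> u k = v k -> u k = 0.
Proof.
move=> [a ->] [b ->] uv; rewrite !ffunE.
case: (eqVneq k a) => [ka|ka]; case: (eqVneq k b) => [kb|kb] //.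
by move: uv; rewrite -ka -kb eqxx.
Qed.

Lemma Tdisj V (Mc : 'I_d -> R) (p u v : pt R d) k :
  generic V Mc -> u \in V -> v \in V -> u != v -> p k = u k -> p k = v k ->
  p k = 0.
Proof.
move=> gV uV vV uv hu hv.
have e : u k = v k by rewrite -hu -hv.
have [su sv] := gV u v uV vV uv k e.
by rewrite hu (@susp_zero _ _ _ _ su sv uv e).
Qed.

Lemma step V (Mc : 'I_d -> R) (q : pt R d) j : suspended V Mc ->
  (forall k, 0 < q k) -> nodom V q ->
  exists q' : pt R d, [/\ forall k, k != j -> q' k = q k, q j <= q' j,
     nodom V q' & exists2 w, w \in V & dtri j q' w].
Proof.
move=> [Mpos [Sin _]] qpos nd.
pose W := [seq w : pt R d <- V | [forall k, (k != j) ==> (w k < q k)]].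
have sW : susp_vertex Mc j \in W.
  rewrite mem_filter Sin andbT; apply/forallP => k; apply/implyP => kj.
  by rewrite ffunE (negbTE kj).
have Wn : W != [::] by apply/eqP => E; rewrite E in sW.
have [w wW Hw] := @argmin_list _ _ (fun w : pt R d => w j) Wn.
move: (wW); rewrite mem_filter => /andP [/forallP wlt wV].
have wlt' : forall k, k != j -> w k < q k.
  by move=> k kj; have := wlt k; rewrite kj.
exists [ffun k => if k == j then w j else q k]; split.
- by move=> k kj; rewrite ffunE (negbTE kj).
- rewrite ffunE eqxx leNgt; apply/negP => H; apply: (nd w wV) => k.
  by case: (eqVneq k j) => [->|kj]; [| exact: wlt'].
- move=> u uV du.
  have uW : u \in W.
    rewrite mem_filter uV andbT; apply/forallP => k; apply/implyP => kj.
    by have := du k; rewrite ffunE (negbTE kj).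
  have := du j; rewrite ffunE eqxx => h.
  have := lt_le_trans h (Hw u uW); by rewrite ltxx.
- exists w => //; split; first by rewrite ffunE eqxx.
  by move=> k kj; rewrite ffunE (negbTE kj); exact: wlt'.
Qed.

Lemma greedy V (Mc : 'I_d -> R) (js : seq 'I_d) : suspended V Mc ->
  forall q : pt R d, (forall k, 0 < q k) -> nodom V q ->
  exists Mx : pt R d, [/\ dle q Mx, forall k, k \notin js -> Mx k = q k,
    nodom V Mx & forall j, j \in js -> exists2 w, w \in V & dtri j Mx w].
Proof.
move=> sV; elim: js => [|j js IH] q qpos nd.
  by exists q; split => // i; rewrite lexx.
have [q' [E1 E2 nd' [w wV [dw1 dw2]]]] := @step _ _ _ j sV qpos nd.
have q'ge : dle q q'.
  by move=> k; case: (eqVneq k j) => [->|kj] //; rewrite E1.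
have q'pos : forall k, 0 < q' k.
  by move=> k; exact: lt_le_trans (qpos k) (q'ge k).
have [Mx [H1 H2 H3 H4]] := IH q' q'pos nd'.
exists Mx; split => //.
- by move=> k; exact: le_trans (q'ge k) (H1 k).
- by move=> k; rewrite inE negb_or => /andP [kj kjs]; rewrite H2 // E1.
- move=> j'; rewrite inE; case: (boolP (j' \in js)) => [/H4 // | nj].
  rewrite orbF => /eqP E; subst j'.
  exists w => //; split; first by rewrite H2.
  by move=> k kj; exact: lt_le_trans (dw2 k kj) (H1 k).
Qed.

Lemma main1 V (Mc : 'I_d -> R) p (c : pt R d -> 'I_d) :
  suspended V Mc -> generic V Mc -> surface V p ->
  (forall v, v \in Dp V p -> c v \in Tp p v /\ 0 < p (c v)) ->
  exists Mx : pt R d, [/\ maximum V Mx, dle p Mx,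
     forall v, v \in Dp V p -> Mx (c v) = p (c v) &
     forall j, (forall v, v \in Dp V p -> c v != j) -> p j < Mx j].
Proof.
move=> sV gV sp Hc.
have [[v0 v0V v0p] ndp] := @surface_elim _ _ sp.
have Vnn : forall v, v \in V -> forall i, 0 <= v i.
  move=> v vV i; case: (classic (is_susp Mc v)) => [[a ->]|ns].
    rewrite ffunE; case: (i == a) => //; exact: ltW (sV.1 a).
  by have [] := sV.2.2 v vV ns i.
have pnn : forall i, 0 <= p i by move=> i; exact: le_trans (Vnn _ v0V i) (v0p i).
pose inC k := has (fun v => c v == k) (Dp V p).
have inCP : forall k, reflect (exists2 v, v \in Dp V p & c v = k) (inC k).
  move=> k; apply: (iffP hasP) => [[v vD /eqP E]|[v vD E]].
    by exists v.
  by exists v; rewrite ?E.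
pose sh e := [ffun k => if inC k then p k else p k + e] : pt R d.
pose Q := fun w (e : R) => forall e', 0 < e' -> e' <= e -> ~ sdom w (sh e').
have Qd : forall w e e', Q w e -> 0 < e' -> e' <= e -> Q w e'.
  move=> w e e' H _ e'e e'' e''0 e''e; apply: H => //; exact: le_trans e''e e'e.
have Qe : forall w, w \in V -> exists2 e, 0 < e & Q w e.
  move=> w wV.
  case: (boolP (w \in Dp V p)) => wD.
    exists 1 => // e' _ _ dw.
    have [Tw _] := Hc w wD; move: Tw; rewrite inE => /eqP Tw.
    have := dw (c w); rewrite ffunE.
    have -> : inC (c w) by apply/inCP; exists w.
    by rewrite Tw ltxx.
  have [i Hi] : exists i, p i < w i.
    apply: NNPP => Hne; move: wD; rewrite mem_filter wV andbT => /negP; apply.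
    apply/forallP => i.
    by rewrite leNgt; apply/negP => h; apply: Hne; exists i.
  exists (w i - p i); first by rewrite subr_gt0.
  move=> e' e'0 e'e dw; have := dw i; rewrite ffunE; case: (inC i) => h; lra.
have [eps eps0 Heps] := @eps_list _ _ _ Qd Qe.
have ndp' : nodom V (sh eps).
  by move=> w wV; exact: Heps w wV eps eps0 (lexx _).
have p'pos : forall k, 0 < sh eps k.
  move=> k; rewrite ffunE; case: (boolP (inC k)) => [/inCP [v vD <-]|_].
    exact: (Hc v vD).2.
  by have := pnn k; lra.
pose js := [seq k <- enum 'I_d | ~~ inC k].
have jsE : forall k, (k \in js) = ~~ inC k.
  by move=> k; rewrite mem_filter mem_enum andbT.
have [Mx [H1 H2 H3 H4]] := @greedy V Mc js sV (sh eps) p'pos ndp'.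
have MxC : forall k, inC k -> Mx k = p k.
  by move=> k kC; rewrite H2 ?jsE ?kC // ffunE kC.
have MxN : forall k, ~~ inC k -> p k < Mx k.
  move=> k kC; have := H1 k; rewrite ffunE (negbTE kC) => h; lra.
have pMx : dle p Mx.
  move=> k; case: (boolP (inC k)) => kC; first by rewrite MxC.
  exact: ltW (MxN k kC).
have wit : forall i, exists2 w, w \in V & dtri i Mx w.
  move=> i; case: (boolP (inC i)) => [iC | niC]; last by apply: H4; rewrite jsE.
  have [v vD cv] := inCP i iC.
  have [vV vp] := @memDp _ _ _ vD.
  have [Tv pc] := Hc v vD; move: Tv; rewrite inE => /eqP Tv.
  exists v => //; split; first by rewrite MxC // -cv.
  move=> k kc; case: (boolP (inC k)) => [kC | nk]; last first.
    exact: le_lt_trans (vp k) (MxN k nk).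
  rewrite MxC //.
  have [u uD uk] := inCP k kC.
  have [uV up] := @memDp _ _ _ uD.
  have [Tu pu] := Hc u uD; move: Tu; rewrite inE uk => /eqP Tu.
  rewrite lt_neqAle vp andbT; apply/negP => /eqP vk.
  have uv : u != v by apply/eqP => E; move: kc; rewrite -uk -cv E eqxx.
  have := @Tdisj V Mc p u v k gV uV vV uv Tu (esym vk).
  by move: pu; rewrite uk => pu pk0; rewrite pk0 ltxx in pu.
exists Mx; split => //.
- split.
    by apply: surface_intro => //; exists v0 => // k; exact: le_trans (v0p k) (pMx k).
  move=> q sq Mq; have [_ ndq] := @surface_elim _ _ sq; apply/ffunP => i.
  have [w wV [w1 w2]] := wit i.
  apply/eqP; rewrite eq_le (Mq i) andbT leNgt; apply/negP => h.
  apply: (ndq w wV) => k; case: (eqVneq k i) => [->|ki]; first by rewrite -w1.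
  exact: lt_le_trans (w2 k ki) (Mq k).
- by move=> v vD; apply: MxC; apply/inCP; exists v.
- move=> j Hj; apply: MxN; apply/negP => /inCP [v vD E].
  by move: (Hj v vD); rewrite E eqxx.
Qed.

Fixpoint chs p (s : seq (pt R d)) : seq (seq 'I_d) :=
  match s with
  | [::] => [:: [::]]
  | v :: s' => [seq i :: r | i <- enum (Tp p v), r <- chs p s']
  end.

Lemma size_chs p s : size (chs p s) = (\prod_(v <- s) #|Tp p v|)%N.
Proof.
elim: s => [|v s IH] /=; first by rewrite big_nil.
by rewrite big_cons size_allpairs IH cardE.
Qed.

Lemma uniq_chs p s : uniq (chs p s).
Proof.
elim: s => [|v s IH] //=.
apply: allpairs_uniq => //; first exact: enum_uniq.
by move=> [i r] [j r'] _ _ /= [-> ->].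
Qed.

Lemma mem_chs p s r : r \in chs p s -> size r = size s /\
  forall (i0 : 'I_d) (v0 : pt R d) j, (j < size s)%N ->
    nth i0 r j \in Tp p (nth v0 s j).
Proof.
elim: s r => [|v s IH] r /=.
  by rewrite inE => /eqP ->; split => // ? ? [].
case/allpairsP => [[i r'] [/= iT r's ->]].
have [sz H] := IH _ r's; split; first by rewrite /= sz.
move=> i0 v0 [|j] /= jlt; first by rewrite mem_enum in iT.
exact: H.
Qed.

End Proof.
Arguments main1 {R d V Mc p c}.
Arguments surface_elim {R d V p}.
Arguments mem_chs {R d p s r}.
Arguments memDp {R d V p v}.
Arguments Tdisj {R d V Mc p u v k}.
Arguments size_chs {R d}.
Arguments uniq_chs {R d}.
Arguments chs {R d}.

Theorem proposition5p1 (R : realType) (d : nat) (V : seq (pt R d))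
    (M : 'I_d -> R) (p : pt R d) :
  antichain V -> suspended V M -> generic V M -> characteristic V p ->
  (forall c : pt R d -> 'I_d,
     (forall v, v \in Dp V p -> c v \in Tp p v /\ 0 < p (c v)) ->
     exists Mx : pt R d, [/\ maximum V Mx, dle p Mx &
       forall v, v \in Dp V p -> Mx (c v) = p (c v)]) /\
  ((forall i, 0 < p i) ->
     exists s : seq (pt R d), [/\ uniq s,
       forall Mx, Mx \in s -> maximum V Mx /\ dle p Mx &
       (\prod_(v <- Dp V p) #|Tp p v| <= size s)%N]).
Proof.
move=> [uV _] sV gV [sp _]; split.
  move=> c Hc; have [Mx [H1 H2 H3 _]] := main1 sV gV sp Hc.
  by exists Mx.
move=> ppos.
have [[v0 v0V v0p] ndp] := surface_elim sp.
have [i0 _] : exists i : 'I_d, ~ (v0 i < p i).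
  by apply: NNPP => H; apply: (ndp v0 v0V) => i; apply: NNPP => h; apply: H; exists i.
pose Ds := Dp V p.
have uDs : uniq Ds by apply: filter_uniq.
pose cr (r : seq 'I_d) := fun x : pt R d => nth i0 r (index x Ds).
have crP : forall r, r \in chs p Ds -> forall v, v \in Ds ->
    cr r v \in Tp p v /\ 0 < p (cr r v).
  move=> r rch v vD; split => //.
  have [_ H] := mem_chs rch.
  have := H i0 v (index v Ds); rewrite index_mem nth_index //; exact.
pose P := fun r Mx => [/\ maximum V Mx, dle p Mx,
     forall v, v \in Ds -> Mx (cr r v) = p (cr r v) &
     forall j, (forall v, v \in Ds -> cr r v != j) -> p j < Mx j].
have Hex : forall r, exists Mx, r \in chs p Ds -> P r Mx.
  move=> r; case: (boolP (r \in chs p Ds)) => rch; last by exists p.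
  have [Mx HM] := main1 sV gV sp (crP r rch).
  by exists Mx.
pose f := fun r => proj1_sig (constructive_indefinite_description _ (Hex r)).
have Hf : forall r, r \in chs p Ds -> P r (f r).
  by move=> r; exact: (proj2_sig (constructive_indefinite_description _ (Hex r))).
exists (map f (chs p Ds)); split.
- rewrite map_inj_in_uniq ?uniq_chs // => r1 r2 r1c r2c Ef.
  have [sz1 _] := mem_chs r1c; have [sz2 _] := mem_chs r2c.
  apply: NNPP => ne.
  have [j [jlt njE]] : exists j, (j < size Ds)%N /\ nth i0 r1 j != nth i0 r2 j.
    apply: NNPP => H; apply: ne; apply: (eq_from_nth (x0 := i0)); first by rewrite sz1 sz2.
    move=> j jlt; apply/eqP; apply: NNPP => h; apply: H; exists j; split => //.
      by rewrite -sz1.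
    by apply/negP.
  pose v := nth p Ds j.
  have vD : v \in Ds by apply: mem_nth.
  have iv : index v Ds = j by apply: index_uniq => //; rewrite -sz1.
  have [_ _ H13 _] := Hf r1 r1c; have [_ _ _ H24] := Hf r2 r2c.
  have := H13 v vD; rewrite Ef.
  have : p (cr r1 v) < f r2 (cr r1 v).
    apply: H24 => u uD; apply/eqP => E.
    have [T1 _] := crP r1 r1c v vD; have [T2 _] := crP r2 r2c u uD.
    move: T1 T2; rewrite !inE E => /eqP T1 /eqP T2.
    case: (eqVneq u v) => [uv | uv].
      by move: E njE; rewrite uv /cr iv => ->; rewrite eqxx.
    have [uV' _] := memDp uD; have [vV' _] := memDp vD.
    have := Tdisj gV uV' vV' uv T2 T1.
    by move=> h; have := ppos (cr r1 v); rewrite h ltxx.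
  by move=> h E'; rewrite E' ltxx in h.
- move=> Mx /mapP [r rch ->]; by have [] := Hf r rch.
- by rewrite size_map size_chs.
Qed.
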